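(* Let $\mathcal Q$ be a finite set of queries, where query $i$ has a size $s_i=\frac{|\mathcal S_i|\cdot\chi_i}{\mathbf p_i}>0$ and a positive weight $\mathbf w_i$. Let $c_2\ge 1$ and $c_3>1$ be constants and put $d=\frac{0.69}{c_2 c_3}$. Let $A_{[1]}=\{i^*\}$ where $i^*$ maximizes $\mathbf w_i$ over all queries $i$ with $s_i\le 1$ (and $A_{[1]}=\emptyset$ if there is none); let $A_{[2]}$ be an optimal solution of the 0-1 knapsack problem $\mathrm{KS}(d)$; and let $A$ be whichever of $A_{[1]},A_{[2]}$ has larger total weight. Let $OPT_{\mathrm{KS}(1)}$ be an optimal solution of $\mathrm{KS}(1)$. Then $$\frac{d}{2}\cdot\mathbf w\big(OPT_{\mathrm{KS}(1)}\big)\le \mathbf w(A).$$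
   Context: For a query $i$, $\mathcal S_i$ is its set of source nodes, $\chi_i>0$ is the time to transmit one of its data units over a link, and $\mathbf p_i>0$ is its period. For a set $B$ of queries, $\mathbf w(B)=\sum_{i\in B}\mathbf w_i$. The 0-1 knapsack problem with bag size $C$, denoted $\mathrm{KS}(C)$, treats each query $i$ as an item of size $s_i$ and weight $\mathbf w_i$, and asks for a subset of items of total size at most $C$ maximizing the total weight. In the paper, $c_2$ is the chromatic number of a coloring of interference-aware grid regions and $c_3$ is the maximum size of a connected dominating set inside an interference-aware region plus one, but only the stated numerical properties are used in the statement. *)

(* Defs.v *)
From mathcomp Require Import all_boot all_order all_algebra.
Set Implicit Arguments. Unset Strict Implicit. Unset Printing Implicit Defensive.
Import Order.TTheory GRing.Theory Num.Theory.
Local Open Scope ring_scope.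

Definition qsize (R : realFieldType) (Q V : finType)
  (S : Q -> {set V}) (chi p : Q -> R) (i : Q) : R :=
  (#|S i|%:R * chi i) / p i.

Definition wsum (R : realFieldType) (Q : finType) (w : Q -> R) (B : {set Q}) : R :=
  \sum_(i in B) w i.

Definition ks_feasible (R : realFieldType) (Q : finType) (s : Q -> R)
  (C : R) (B : {set Q}) : Prop :=
  \sum_(i in B) s i <= C.

Definition ks_optimal (R : realFieldType) (Q : finType) (s w : Q -> R)
  (C : R) (B : {set Q}) : Prop :=
  ks_feasible s C B /\ forall B', ks_feasible s C B' -> wsum w B' <= wsum w B.

Definition is_A1 (R : realFieldType) (Q : finType) (s w : Q -> R)
  (A1 : {set Q}) : Prop :=
  ((exists i, s i <= 1) ->
     exists istar, [/\ s istar <= 1,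
                      (forall j, s j <= 1 -> w j <= w istar) &
                      A1 = [set istar]]) /\
  (~ (exists i, s i <= 1) -> A1 = set0).

(* Main.v *)
Require Import Defs.
From mathcomp Require Import all_boot all_order all_algebra.
From mathcomp Require Import ring lra.
Import Order.TTheory GRing.Theory Num.Theory.
Local Open Scope ring_scope.

Section Key.
Variables (R : realFieldType) (Q : finType) (s w : Q -> R).
Hypotheses (hs : forall i, 0 < s i) (hw : forall i, 0 < w i).

Lemma sum_ge0 (B : {set Q}) (f : Q -> R) : (forall i, 0 < f i) -> 0 <= \sum_(i in B) f i.
Proof. by move=> h; apply: sumr_ge0 => i _; apply: ltW. Qed.

Lemma mindens (B : {set Q}) (x0 : Q) : x0 \in B ->
  exists2 m, m \in B & forall i, i \in B -> w m * s i <= w i * s m.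
Proof.
move=> hx0.
case: (@arg_minP _ R Q x0 (mem B) (fun i => w i / s i) hx0) => m hm hmin.
exists m => // i hi; have := hmin i hi.
rewrite ler_pdivrMr // mulrAC ler_pdivlMr //.
Qed.

Lemma key (t : R) (B : {set Q}) : 0 <= t ->
  exists P : {set Q}, exists v : R, [/\ P \subset B, (\sum_(i in P) s i) <= t,
    (v = 0 \/ exists2 x, x \in B & v = w x),
    (t <= (\sum_(i in B) s i) -> t * (\sum_(i in B) w i) <= (\sum_(i in B) s i) * ((\sum_(i in P) w i) + v))
  & ((\sum_(i in B) s i) <= t -> (\sum_(i in B) w i) <= (\sum_(i in P) w i) + v)].
Proof.
move=> ht.
move: {2}#|B|.+1 (ltnSn #|B|) => n; elim: n B => // n IH B hB.
have [hle|hlt] := leP (\sum_(i in B) s i) t.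
  exists B, 0; split => //; first by left.
    move=> h; have -> : t = \sum_(i in B) s i by apply/eqP; rewrite eq_le h hle.
    by rewrite addr0.
  by rewrite addr0.
have [x0 hx0] : exists x, x \in B.
  case: (set_0Vmem B) => [E|[x hx]]; last by exists x. move: hlt; rewrite E big_set0 => h.
  by exfalso; move: (lt_le_trans h ht); rewrite ltxx.
have [m hm hmin] := @mindens B x0 hx0.
have hB' : (#|B :\ m| < n)%N.
  by rewrite (cardsD1 m B) hm in hB.
have eS := big_setD1 m hm (F := s) (aop := +%R) (idx := 0).
have eW := big_setD1 m hm (F := w) (aop := +%R) (idx := 0).
rewrite /= in eS eW.
have [hle'|hlt'] := leP (\sum_(i in B :\ m) s i) t.
  exists (B :\ m), (w m); split => //.
  - exact: subsetDl.
  - by right; exists m.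
  - move=> _; rewrite eW (addrC (w m)); apply: ler_wpM2r; last exact: ltW.
    by rewrite addrC; apply: addr_ge0; [apply: ltW | apply: sum_ge0].
have [P [v [hP1 hP2 hP3 hP4 hP5]]] := IH _ hB'.
exists P, v; split => //.
- exact: subset_trans hP1 (subsetDl _ _).
- case: hP3 => [->|[x hx ->]]; [by left|right; exists x => //].
  by move: hx; rewrite in_setD1 => /andP[].
- move=> _.
  have h1 := hP4 (ltW hlt').
  set sB' := \sum_(i in B :\ m) s i in h1 hlt' eS *.
  set wB' := \sum_(i in B :\ m) w i in h1 eW *.
  set X := \sum_(i in P) w i + v in h1 *.
  have hdens : w m * sB' <= wB' * s m.
    rewrite /sB' /wB' big_distrr big_distrl /=.
    apply: ler_sum => i; rewrite in_setD1 => /andP[_ hi]; exact: hmin.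
  have sB'pos : 0 < sB' by apply: le_lt_trans hlt'.
  rewrite eS eW.
  have : sB' * (t * (w m + wB')) <= sB' * ((s m + sB') * X).
    have e1 : sB' * (t * (w m + wB')) = t * (w m * sB' + wB' * sB') by ring.
    have e2 : sB' * ((s m + sB') * X) = s m * (sB' * X) + sB' * (sB' * X) by ring.
    rewrite e1 e2.
    have h2 : t * (w m * sB') <= t * (wB' * s m) by rewrite ler_wpM2l.
    have h3 : t * (wB' * s m) <= s m * (sB' * X).
      have -> : t * (wB' * s m) = s m * (t * wB') by ring.
      by rewrite ler_pM2l.
    have h4 : t * (wB' * sB') <= sB' * (sB' * X).
      have -> : t * (wB' * sB') = sB' * (t * wB') by ring.
      by rewrite ler_pM2l.
    rewrite mulrDr; apply: lerD => //; exact: le_trans h2 h3.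
  by rewrite ler_pM2l.
Qed.

End Key.

Theorem lemma4 (R : realFieldType) (Q V : finType)
  (S : Q -> {set V}) (chi p w : Q -> R)
  (hchi : forall i, 0 < chi i) (hp : forall i, 0 < p i)
  (hs : forall i, 0 < qsize S chi p i) (hw : forall i, 0 < w i)
  (c2 c3 : R) (hc2 : 1 <= c2) (hc3 : 1 < c3)
  (A1 A2 OPT1 : {set Q}) :
  let s := qsize S chi p in
  let d := (69%:R / 100%:R) / (c2 * c3) in
  is_A1 s w A1 ->
  ks_optimal s w d A2 ->
  ks_optimal s w 1 OPT1 ->
  let A := if wsum w A2 <= wsum w A1 then A1 else A2 in
  d / 2%:R * wsum w OPT1 <= wsum w A.
Proof.
move=> s d hA1 [_ hA2] [hO1 _].
change (d / 2%:R * wsum w OPT1 <= wsum w (if wsum w A2 <= wsum w A1 then A1 else A2)).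
set A := (if _ then _ else _).
have c23 : 1 < c2 * c3 by nra.
have d0 : 0 <= d by rewrite /d divr_ge0 //; lra.
have d1 : d <= 1.
  rewrite /d ler_pdivrMr; last lra.
  lra.
have [P [v [hP1 hP2 hP3 hP4 hP5]]] := @key _ _ s w hs hw d OPT1 d0.
set sO := \sum_(i in OPT1) s i in hP4 hP5.
set wO := \sum_(i in OPT1) w i in hP4 hP5.
have sO1 : sO <= 1 by exact: hO1.
have wO0 : 0 <= wO by apply: sum_ge0.
have hPA2 : wsum w P <= wsum w A2 by apply: hA2.
have wA10 : 0 <= wsum w A1 by apply: sum_ge0.
have hvA1 : v <= wsum w A1.
  case: hP3 => [->//|[x hx ->]].
  have sx : s x <= 1.
    apply: le_trans sO1; rewrite /sO (big_setD1 x hx) /= lerDl.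
    by apply: sum_ge0.
  case: hA1 => [h _]; have [istar [_ hmax ->]] := h (ex_intro _ x sx).
  by rewrite /wsum big_set1; apply: hmax.
have hmain : d * wO <= wsum w P + v.
  have [hd|hd] := leP d sO.
    have hv0 : 0 <= v by case: hP3 => [->//|[x _ ->]]; apply: ltW.
    have hX : 0 <= wsum w P + v by apply: addr_ge0 => //; apply: sum_ge0.
    apply: le_trans (hP4 hd) _; rewrite /wsum.
    by rewrite ler_piMl.
  have := hP5 (ltW hd); rewrite /wsum => h.
  apply: le_trans h; rewrite ler_piMl //.
have hA : (wsum w A1 + wsum w A2) / 2%:R <= wsum w A.
  rewrite /A; case: ifP => h.
    rewrite ler_pdivrMr //; lra.
  move/negbT: h; rewrite -ltNge => h; rewrite ler_pdivrMr //; lra.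
have eO : wsum w OPT1 = wO by [].
apply: le_trans hA; rewrite eO mulrAC ler_pM2r //; lra.
Qed.
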